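(* Let $0\leq B<1$, $q\geq3$, $\Delta\geq3$, and $d=\Delta-1$. If $B\geq\frac{\Delta-q}{\Delta}$, then every positive solution $R_1,\dots,R_q,C_1,\dots,C_q>0$ of the system \[R_i\propto\Big(BC_i+\sum_{j\neq i}C_j\Big)^{d},\qquad C_j\propto\Big(BR_j+\sum_{i\neq j}R_i\Big)^{d}\qquad(i,j\in[q])\] (proportionality constants independent of $i$, resp. $j$) satisfies $R_1=\dots=R_q$ and $C_1=\dots=C_q$.
   Context: This system is the tree recursion (fixpoint) system for the antiferromagnetic $q$-state Potts model with parameter $B$ on the $\Delta$-regular tree; $B=0$ corresponds to $q$-colorings. *)

(* Defs.v *)
From mathcomp Require Import all_boot all_order all_algebra.
Set Implicit Arguments. Unset Strict Implicit. Unset Printing Implicit Defensive.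
Import Order.TTheory GRing.Theory Num.Theory.
Local Open Scope ring_scope.

Definition potts_rhs (R : realFieldType) (q d : nat) (B : R) (X : 'I_q -> R)
  (i : 'I_q) : R :=
  (B * X i + \sum_(j < q | j != i) X j) ^+ d.

Definition proportional (R : realFieldType) (q : nat) (f g : 'I_q -> R) : Prop :=
  exists lambda : R, 0 < lambda /\ forall i, f i = lambda * g i.

(* Main.v *)
Require Import Defs.
From mathcomp Require Import all_boot all_order all_algebra.
From mathcomp Require Import reals.
From mathcomp Require Import ring lra.
Import Order.TTheory GRing.Theory Num.Theory.
Local Open Scope ring_scope.

Section Poly.
Variable R : realFieldType.

Fixpoint Gs (a c : R) (n : nat) : R :=
  match n with 0%N => 0 | n'.+1 => a ^+ n'.+1 + c * Gs a c n' end.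

Lemma Gs_id a c n : (c - a) * Gs a c n = a * (c ^+ n - a ^+ n).
Proof.
elim: n => [|n IH] /=; first by rewrite !expr0; ring.
rewrite mulrDr mulrCA IH !exprS; ring.
Qed.

Lemma powle (a c : R) n : 0 <= a -> a <= c -> a ^+ n <= c ^+ n.
Proof. move=> a0 h. apply: ((@lterXn2r R).1 n) => //. rewrite nnegrE. exact: le_trans h. Qed.

Lemma powdiff_ge0 (a c : R) n : 0 <= a -> 0 <= c -> 0 <= (c ^+ n - a ^+ n) * (c - a).
Proof.
move=> a0 c0; case: (lerP a c) => h.
  by apply: mulr_ge0; rewrite subr_ge0 //; exact: (@powle a c n a0 h).
by apply: mulr_le0; rewrite subr_le0 //; [exact: (@powle c a n c0 (ltW h))|exact: ltW].
Qed.

Lemma hn_ge0 (a c : R) n : 0 <= a -> 0 <= c ->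
  0 <= c ^+ n.+1 + n%:R * a ^+ n.+1 - (n.+1)%:R * c * a ^+ n.
Proof.
move=> a0 c0; elim: n => [|n IH]; first by rewrite expr0 expr1; lra.
have := @powdiff_ge0 a c n.+1 a0 c0.
have := mulr_ge0 a0 IH.
rewrite -!natr1 !exprS; nra.
Qed.

Definition Qd (a c : R) n := (n%:R - 1) * c ^+ n + (n%:R + 1) * a ^+ n - 2 * Gs a c n.

Lemma Qd_S (a c : R) n : Qd a c n.+1 =
  c * Qd a c n + (c ^+ n.+1 + n%:R * a ^+ n.+1 - (n.+1)%:R * c * a ^+ n).
Proof. rewrite /Qd /= -!natr1 !exprS; ring. Qed.

Lemma Qd_gt0 (a c : R) n : 0 <= a -> a < c -> (2 <= n)%N -> 0 < Qd a c n.
Proof.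
move=> a0 ac; elim: n => [|n IH] //; case: n IH => [|n] IH // _.
case: n IH => [|n] IH.
  rewrite /Qd /= mulr0 addr0 !expr2; nra.
rewrite Qd_S; have := @hn_ge0 a c n.+2 a0 (le_trans a0 (ltW ac)).
have cp : 0 < c by lra.
have := mulr_gt0 cp (IH isT); lra.
Qed.

Lemma keyL (a c b q : R) d : 0 <= a -> a < c -> (2 <= d)%N -> 0 < b ->
  b * (d%:R + 1) <= q ->
  2 * b * a * (c ^+ d - a ^+ d) - 2 * (q - b) * (c - a) * a ^+ d <
  (q - 2 * b) * (c - a) * (c ^+ d - a ^+ d).
Proof.
move=> a0 ac d2 b0 hq.
have hQ := @Qd_gt0 a c d a0 ac d2.
have hG := Gs_id a c d.
have cd0 : 0 <= c ^+ d by apply: exprn_ge0; lra.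
have ad0 : 0 <= a ^+ d by apply: exprn_ge0.
have ca : 0 < c - a by lra.
rewrite /Qd in hQ.
set G := Gs a c d in hG hQ.
set X := c ^+ d in cd0 hQ hG *; set Y := a ^+ d in ad0 hQ hG *.
have e : 2 * b * a * (X - Y) - 2 * (q - b) * (c - a) * Y =
   (c - a) * (2 * b * G - 2 * (q - b) * Y).
  rewrite (_ : (c - a) * (2 * b * G - 2 * (q - b) * Y) =
     2 * b * ((c - a) * G) - 2 * (q - b) * (c - a) * Y); last by ring.
  by rewrite hG; ring.
suff h : 2 * b * G - 2 * (q - b) * Y < (q - 2 * b) * (X - Y).
  rewrite e; rewrite -(ltr_pM2l ca) in h.
  by rewrite (_ : (q - 2 * b) * (c - a) * (X - Y) = (c - a) * ((q - 2 * b) * (X - Y))); last ring.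
have h1 : b * (2 * G) < b * ((d%:R - 1) * X + (d%:R + 1) * Y).
  by rewrite ltr_pM2l //; lra.
set D := d%:R in hq h1 *.
nra.
Qed.
End Poly.

Lemma eqle (R : numDomainType) (x y : R) : x = y -> x <= y.
Proof. by move->. Qed.

Lemma rhs_eq (R : realType) (q d : nat) (B : R) (X : 'I_q -> R) j :
  potts_rhs d B X j = (\sum_k X k - (1 - B) * X j) ^+ d.
Proof.
rewrite /potts_rhs [X in _ = (X - _) ^+ _](bigD1 j) //=; f_equal; ring.
Qed.

Lemma base_ge0 (R : realType) (q : nat) (B : R) (X : 'I_q -> R) j :
  0 <= B -> (forall k, 0 < X k) -> 0 <= \sum_k X k - (1 - B) * X j.
Proof.
move=> B0 Xp; rewrite (bigD1 j) //=.
have : 0 <= \sum_(k < q | k != j) X k by apply: sumr_ge0 => k _; exact: ltW.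
have := Xp j; nra.
Qed.

Theorem lemma26 (R : realType) (q Delta : nat) (B : R)
  (Rv Cv : 'I_q -> R) :
  0 <= B -> B < 1 -> (3 <= q)%N -> (3 <= Delta)%N ->
  (Delta%:R - q%:R) / Delta%:R <= B ->
  (forall i, 0 < Rv i) -> (forall j, 0 < Cv j) ->
  proportional Rv (potts_rhs (Delta.-1) B Cv) ->
  proportional Cv (potts_rhs (Delta.-1) B Rv) ->
  (forall i j, Rv i = Rv j) /\ (forall i j, Cv i = Cv j).
Proof.
move=> B0 B1 q3 D3 hB Rp Cp [lam [lam0 hR]] [mu [mu0 hC]].
set d := Delta.-1 in hR hC.
have hD : Delta = d.+1 by rewrite /d prednK // (leq_trans _ D3).
have d2 : (2 <= d)%N by rewrite /d -ltnS prednK // (leq_trans _ D3).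
set b := 1 - B.
have b0 : 0 < b by rewrite /b; lra.
have hq : b * (d%:R + 1) <= q%:R.
  have := ler0n R d.
  move: hB; rewrite hD -natr1 ler_pdivrMr; last by have := ler0n R d; lra.
  rewrite /b; nra.
set S := \sum_k Cv k.
set T := \sum_k Rv k.
have hR' : forall j, Rv j = lam * (S - b * Cv j) ^+ d by move=> j; rewrite hR rhs_eq.
have hC' : forall j, Cv j = mu * (T - b * Rv j) ^+ d by move=> j; rewrite hC rhs_eq.
have rho0 : forall j, 0 <= S - b * Cv j by move=> j; exact: base_ge0.
have sig0 : forall j, 0 <= T - b * Rv j by move=> j; exact: base_ge0.
set Dk := fun i k => (q%:R * Cv i - S) * (q%:R * Rv k - T) - (q%:R * Cv k - S) * (q%:R * Rv i - T).
have pairP : forall i k, Cv k < Cv i -> 0 < Dk i k.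
  move=> i k hik.
  have rl : S - b * Cv i < S - b * Cv k by rewrite ltrD2l ltrN2 ltr_pM2l.
  have Rki : Rv i < Rv k.
    by rewrite !hR' ltr_pM2l // ltrXn2r // -lt0n (leq_trans _ d2).
  have sl : T - b * Rv k < T - b * Rv i.
    by rewrite ltrD2l ltrN2 ltr_pM2l.
  have K1 := @keyL R _ _ b q%:R d (rho0 i) rl d2 b0 hq.
  have K2 := @keyL R _ _ b q%:R d (sig0 k) sl d2 b0 hq.
  rewrite -(ltr_pM2l lam0) in K1.
  rewrite -(ltr_pM2l mu0) in K2.
  set Ai := (S - b * Cv i) ^+ d in K1 hR'.
  have K1R : 2 * b * (S - b * Cv i) * (Rv k - Rv i) - 2 * (q%:R - b) * (b * (Cv i - Cv k)) * Rv i
      < (q%:R - 2 * b) * (b * (Cv i - Cv k)) * (Rv k - Rv i).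
    move: K1; rewrite !hR' -/Ai; set Ak := (S - b * Cv k) ^+ d.
    have e1 : forall x y : R, x = y -> y = x by [].
    rewrite (_ : S - b * Cv k - (S - b * Cv i) = b * (Cv i - Cv k)); last by ring.
    move=> K1; apply: (le_lt_trans _ (lt_le_trans K1 _)); apply: eqle; ring.
  have K2R : 2 * b * (T - b * Rv k) * (Cv i - Cv k) - 2 * (q%:R - b) * (b * (Rv k - Rv i)) * Cv k
      < (q%:R - 2 * b) * (b * (Rv k - Rv i)) * (Cv i - Cv k).
    move: K2; rewrite !hC'.
    rewrite (_ : T - b * Rv i - (T - b * Rv k) = b * (Rv k - Rv i)); last by ring.
    move=> K2; apply: (le_lt_trans _ (lt_le_trans K2 _)); apply: eqle; ring.
  have E : 2 * b * Dk i k = q%:R * (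
     ((q%:R - 2 * b) * (b * (Cv i - Cv k)) * (Rv k - Rv i) -
      (2 * b * (S - b * Cv i) * (Rv k - Rv i) - 2 * (q%:R - b) * (b * (Cv i - Cv k)) * Rv i)) +
     ((q%:R - 2 * b) * (b * (Rv k - Rv i)) * (Cv i - Cv k) -
      (2 * b * (T - b * Rv k) * (Cv i - Cv k) - 2 * (q%:R - b) * (b * (Rv k - Rv i)) * Cv k))).
    rewrite /Dk /=; ring.
  have qp : 0 < q%:R :> R by rewrite ltr0n (leq_trans _ q3).
  have : 0 < 2 * b * Dk i k.
    rewrite E; apply: mulr_gt0 => //; lra.
  rewrite pmulr_rgt0 //; apply: mulr_gt0 => //; lra.
have [i _ Hi] := @Order.TotalTheory.arg_maxP _ _ _ (Ordinal (leq_trans (isT : (0 < 3)%N) q3)) predT Cv isT.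
have sumD : \sum_k Dk i k = 0.
  rewrite /Dk sumrB -!mulr_sumr -!mulr_suml !sumrB !sumr_const card_ord -/S -/T.
  rewrite -!mulr_sumr -/S -/T !mulr_natl; ring.
have Dge0 : forall k, 0 <= Dk i k.
  move=> k; case: (ltrP (Cv k) (Cv i)) => h; first exact: ltW (pairP _ _ h).
  have ek : Cv k = Cv i by apply/eqP; rewrite eq_le h andbT; exact: Hi.
  have ekR : Rv k = Rv i by rewrite !hR' ek.
  by rewrite /Dk ek ekR subrr.
have allC : forall k, Cv k = Cv i.
  move=> k; case: (ltrP (Cv k) (Cv i)) => h.
    have := pairP _ _ h; rewrite (psumr_eq0P (fun k _ => Dge0 k) sumD) //; by rewrite ltxx.
  by apply/eqP; rewrite eq_le h andbT; exact: Hi.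
have allR : forall k, Rv k = Rv i by move=> k; rewrite !hR' allC.
by split=> j k; rewrite ?allC ?allR.
Qed.
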